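(* Let $M_n$ be the array indexed by $\{0,1,\dots,n\}^3$ with $(M_n)_{i,j,k}=\min\big(k\min(i,j),\ ij-(n-k)\max(0,i+j-n)\big)$. Then $M_n$ is a corner-sum hypermatrix of order $n$ and $M_n\ge C$ entrywise for every corner-sum hypermatrix $C$ of order $n$; i.e. $M_n$ is the unique minimum element of $(\mathcal C_n,\preceq)$.
   Context: Let $[0,n]=\{0,1,\dots,n\}$. A corner-sum hypermatrix of order $n$ is an integer array $C=(C_{i,j,k})_{i,j,k\in[0,n]}$ such that for all $i,j\in[0,n]$: $C_{i,j,0}=C_{i,0,j}=C_{0,i,j}=0$, $C_{i,j,n}=C_{i,n,j}=C_{n,i,j}=ij$, and for all $k\in\{1,\dots,n\}$ each of $C_{i,j,k}-C_{i,j,k-1}$, $C_{i,k,j}-C_{i,k-1,j}$, $C_{k,i,j}-C_{k-1,i,j}$ is an integer in $\{\max(0,i+j-n),\dots,\min(i,j)\}$. $\mathcal C_n$ is the set of these, ordered by $C\preceq D$ iff $C\ge D$ entrywise. *)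

(* Defs.v *)
From mathcomp Require Import all_boot all_order all_algebra.
Set Implicit Arguments. Unset Strict Implicit. Unset Printing Implicit Defensive.
Import Order.TTheory GRing.Theory Num.Theory.
Local Open Scope ring_scope.

(* A hypermatrix indexed by [0,n]^3 is represented as a function
   nat -> nat -> nat -> int; only the values at indices <= n matter. *)
Definition hypermatrix := nat -> nat -> nat -> int.

Definition in_step_range (n i j : nat) (d : int) : Prop :=
  ((i + j - n)%N)%:Z <= d /\ d <= (minn i j)%:Z.
(* note: (i + j - n)%N is truncated subtraction, i.e. max(0, i+j-n) *)

Definition corner_sum (n : nat) (C : hypermatrix) : Prop :=
  (forall i j : nat, (i <= n)%N -> (j <= n)%N ->
     (C i j 0%N = 0 /\ C i 0%N j = 0 /\ C 0%N i j = 0) /\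
     (C i j n = (i * j)%N%:Z /\ C i n j = (i * j)%N%:Z /\
      C n i j = (i * j)%N%:Z)) /\
  (forall i j k : nat, (i <= n)%N -> (j <= n)%N -> (1 <= k <= n)%N ->
     [/\ in_step_range n i j (C i j k - C i j k.-1),
         in_step_range n i j (C i k j - C i k.-1 j)
       & in_step_range n i j (C k i j - C k.-1 i j)]).

Definition cs_le (n : nat) (C D : hypermatrix) : Prop :=
  forall i j k : nat, (i <= n)%N -> (j <= n)%N -> (k <= n)%N -> D i j k <= C i j k.

Definition Mn (n : nat) : hypermatrix := fun i j k =>
  Num.min ((k * minn i j)%N%:Z)
          ((i * j)%N%:Z - ((n - k) * (i + j - n))%N%:Z).

(* Main.v *)
Require Import Defs.
From mathcomp Require Import all_boot all_order all_algebra zify.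
Import Order.TTheory GRing.Theory Num.Theory.
Local Open Scope ring_scope.
Local Open Scope ring_scope.
Lemma hcL (n i j k : nat) : (i <= n)%N -> (j <= n)%N -> ((n - k) * (i + j - n) <= i * j)%N.
Proof.
move=> hi hj; apply: leq_trans (leq_mul (leq_subr k n) (leqnn _)) _.
case: (leqP (i + j) n) => h.
  have -> : (i + j - n = 0)%N by lia.
  by rewrite muln0.
nia.
Qed.

Definition SS (n i j k : nat) : int := (i*j + j*k + k*i + n*n)%N%:Z - (n*(i+j+k))%N%:Z.

Lemma keyM (n i j k : nat) : (i <= n)%N -> (j <= n)%N -> (k <= n)%N ->
  Mn n i j k = Num.min (Num.min (k*i)%N%:Z (k*j)%N%:Z) (Num.min (i*j)%N%:Z (SS n i j k)).
Proof.
move=> hi hj hk.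
have e1 : ((k * minn i j)%N%:Z = Num.min (k*i)%N%:Z (k*j)%N%:Z :> int).
  case: (leqP i j) => h.
    have hm : (k*i <= k*j)%N by rewrite leq_mul2l h orbT.
    lia.
  have hm : (k*j <= k*i)%N by rewrite leq_mul2l (ltnW h) orbT.
  lia.
have e2 : (i * j)%N%:Z - ((n - k) * (i + j - n))%N%:Z = Num.min (i*j)%N%:Z (SS n i j k) :> int.
rewrite /SS; case: (leqP (i + j) n) => h.
  have -> : (i + j - n = 0)%N by lia.
  rewrite muln0 subr0 min_l //. nia.
rewrite min_r; nia.
by rewrite /Mn e1 e2.
Qed.

Lemma symM (n i j k : nat) : (i <= n)%N -> (j <= n)%N -> (k <= n)%N ->
  Mn n i j k = Mn n i k j.
Proof.
move=> hi hj hk; rewrite !keyM // /SS. lia.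
Qed.
Lemma step1 (n i j k : nat) : (i <= n)%N -> (j <= n)%N -> (1 <= k <= n)%N ->
  in_step_range n i j (Mn n i j k - Mn n i j k.-1).
Proof.
move=> hi hj /andP[hk1 hk2]; rewrite /in_step_range /Mn.
have e2 : ((n - k.-1) * (i + j - n) = (n - k) * (i + j - n) + (i+j-n))%N.
  case: k hk1 hk2 => // k _ /= hk; have -> : (n - k = (n - k.+1).+1)%N by lia.
  by rewrite mulSn addnC.
have e1 : (k * minn i j = k.-1 * minn i j + minn i j)%N.
  by rewrite -{1}(prednK hk1) mulSn addnC.
rewrite e1 e2.
have hb : (i + j - n <= minn i j)%N by lia.
have hc : ((n - k) * (i + j - n) <= i * j)%N.
  exact: hcL.
move: hb hc.
set A := (k.-1 * minn i j)%N. set B := ((n - k) * (i + j - n))%N.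
move=> hb hc. split; lia.
Qed.
Lemma upper (n : nat) (C : hypermatrix) : corner_sum n C ->
  forall i j k : nat, (i <= n)%N -> (j <= n)%N -> (k <= n)%N -> C i j k <= Mn n i j k.
Proof.
move=> [hb hs] i j k hi hj hk; rewrite /Mn le_min; apply/andP; split.
  elim: k hk => [|k IH] hk.
    by have [[-> _] _] := hb i j hi hj; rewrite mul0n.
  have [[h1 h2] _ _] := hs i j k.+1 hi hj hk.
  have := IH (ltnW hk); rewrite /= mulSn in h1 h2 *. lia.
have : forall m, (m <= n)%N -> C i j (n - m)%N <= (i * j)%N%:Z - (m * (i + j - n))%N%:Z.
  elim=> [|m IH] hm.
    by have [_ [h _]] := hb i j hi hj; rewrite subn0 h mul0n subr0.
  have hm' : (1 <= n - m <= n)%N by lia.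
  have [[h1 h2] _ _] := hs i j (n - m)%N hi hj hm'.
  have e : ((n - m).-1 = n - m.+1)%N by lia.
  have := IH (ltnW hm); rewrite e mulSn in h1 *. lia.
move=> /(_ (n - k)%N (leq_subr _ _)); rewrite subKn //.
Qed.

Lemma swap12 (n i j k : nat) : Mn n i j k = Mn n j i k.
Proof. by rewrite /Mn minnC (mulnC j i) (addnC j i). Qed.

Lemma perm3 (n i j k : nat) : (i <= n)%N -> (j <= n)%N -> (k <= n)%N ->
  Mn n k i j = Mn n i j k.
Proof.
move=> hi hj hk.
by rewrite symM // swap12 symM // swap12.
Qed.

Lemma M0 (n i j : nat) : (i <= n)%N -> (j <= n)%N -> Mn n i j 0 = 0.
Proof.
move=> hi hj; have h := hcL n i j 0 hi hj; rewrite subn0 in h.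
rewrite /Mn mul0n subn0 min_l //; lia.
Qed.

Lemma Mnn (n i j : nat) : (i <= n)%N -> (j <= n)%N -> Mn n i j n = (i * j)%N%:Z.
Proof.
move=> hi hj.
have h : (i * j <= n * minn i j)%N.
  case: (leqP i j) => h.
    nia.
  nia.
rewrite /Mn subnn mul0n subr0 min_r //; lia.
Qed.

Theorem mainTheorem9 (n : nat) :
  corner_sum n (Mn n) /\
  (forall C : hypermatrix, corner_sum n C ->
     forall i j k : nat, (i <= n)%N -> (j <= n)%N -> (k <= n)%N ->
       C i j k <= Mn n i j k) /\
  (forall C : hypermatrix, corner_sum n C ->
     (forall D : hypermatrix, corner_sum n D -> cs_le n C D) ->
     forall i j k : nat, (i <= n)%N -> (j <= n)%N -> (k <= n)%N ->
       C i j k = Mn n i j k).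
Proof.
have hM : corner_sum n (Mn n).
  split.
    move=> i j hi hj; have h0 : (0 <= n)%N by [].
    rewrite (symM n i 0 j hi h0 hj) (perm3 n i j 0 hi hj h0) !M0 //.
    by rewrite (symM n i n j hi (leqnn n) hj) (perm3 n i j n hi hj (leqnn n)) !Mnn.
  move=> i j k hi hj /[dup] hk /andP[hk1 hk2].
  have hk' : (k.-1 <= n)%N by lia.
  split; first exact: step1.
    rewrite (symM n i k j hi hk2 hj) (symM n i k.-1 j hi hk' hj); exact: step1.
  rewrite (perm3 n i j k hi hj hk2) (perm3 n i j k.-1 hi hj hk'); exact: step1.
split; first exact: hM.
split; first exact: upper.
move=> C hC hmax i j k hi hj hk.
apply/eqP; rewrite eq_le upper //=.
exact: hmax (Mn n) hM i j k hi hj hk.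
Qed.
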